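(* Let $\mathcal{H}$ be a complex Hilbert space, $A\in\mathcal{B}(\mathcal{H})$ positive and $S\in\mathcal{B}_A(\mathcal{H})$. Then $$d\omega_A^2(S)\le\frac14\left\|S^{\sharp_A}S+SS^{\sharp_A}+4\left(S^{\sharp_A}S\right)^2\right\|_A+\frac12\,\omega_A\left(S^2\right).$$
   Context: $\mathcal{B}(\mathcal{H})$ denotes the bounded linear operators on $\mathcal{H}$. For positive $A$, $\langle x,z\rangle_A=\langle Ax,z\rangle$ and $\|z\|_A=\|A^{1/2}z\|$. $\mathcal{B}_A(\mathcal{H})$ is the set of $S\in\mathcal{B}(\mathcal{H})$ for which some $R\in\mathcal{B}(\mathcal{H})$ satisfies $AR=S^*A$; for such $S$, $S^{\sharp_A}=A^{\dagger}S^*A$ with $A^\dagger$ the Moore–Penrose inverse of $A$. For operators $T$ bounded with respect to $\|\cdot\|_A$: $\|T\|_A=\sup_{\|z\|_A=1}\|Tz\|_A$, $\omega_A(T)=\sup_{\|z\|_A=1}|\langle Tz,z\rangle_A|$, and $d\omega_A(T)=\sup_{\|z\|_A=1}(|\langle Tz,z\rangle_A|^2+\|Tz\|_A^4)^{1/2}$. *)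

(* Defs.v *)
From HB Require Import structures.
From mathcomp Require Import all_boot all_order all_algebra.
From mathcomp Require Import boolp classical_sets reals ereal.
From mathcomp Require Import complex.
Set Implicit Arguments. Unset Strict Implicit. Unset Printing Implicit Defensive.
Import Order.TTheory GRing.Theory Num.Theory.
Local Open Scope ring_scope.
Local Open Scope classical_set_scope.

Section Hilbert.
Variables (R : realType) (V : lmodType R[i]) (ip : V -> V -> R[i]).

Definition hnorm (x : V) : R := Num.sqrt (complex.Re (ip x x)).

Definition is_inner_product : Prop :=
  [/\ (forall (a : R[i]) (x y z : V), ip (a *: x + y) z = a * ip x z + ip y z),
      (forall x y : V, ip y x = conjc (ip x y)),
      (forall x : V, 0 <= ip x x) &
      (forall x : V, ip x x = 0 -> x = 0)].

Definition is_complete : Prop :=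
  forall u : nat -> V,
    (forall e : R, 0 < e -> exists N : nat, forall m n : nat,
        (N <= m)%N -> (N <= n)%N -> hnorm (u m - u n) < e) ->
    exists l : V, forall e : R, 0 < e -> exists N : nat, forall n : nat,
        (N <= n)%N -> hnorm (u n - l) < e.

Definition is_hilbert : Prop := is_inner_product /\ is_complete.

Definition bounded_op (T : V -> V) : Prop :=
  (forall (a : R[i]) (x y : V), T (a *: x + y) = a *: T x + T y) /\
  exists M : R, forall x : V, hnorm (T x) <= M * hnorm x.

Definition adjoint (T : V -> V) : V -> V :=
  fun y => xget 0 [set w : V | forall x : V, ip (T x) y = ip x w].

Definition positive_op (A : V -> V) : Prop :=
  bounded_op A /\ forall x : V, 0 <= ip (A x) x.

Definition in_BA (A S : V -> V) : Prop :=
  bounded_op S /\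
  exists Rop : V -> V, bounded_op Rop /\ forall x : V, A (Rop x) = adjoint S (A x).

(* Moore-Penrose inverse A^dagger evaluated on the range of A:
   A^dagger y is the unique x in N(A)^perp with A x = y. *)
Definition mpinv (A : V -> V) (y : V) : V :=
  xget 0 [set x : V | (forall k : V, A k = 0 -> ip x k = 0) /\ A x = y].

Definition sharpA (A S : V -> V) : V -> V :=
  fun z => mpinv A (adjoint S (A z)).

(* ||z||_A = ||A^{1/2} z|| = sqrt <A z, z> *)
Definition normA (A : V -> V) (z : V) : R := Num.sqrt (complex.Re (ip (A z) z)).

Definition unitA (A : V -> V) : set V := [set z | normA A z = 1].

(* supremum of a set of nonnegative quantities (sup of the empty set is 0) *)
Definition sup0 (E : set (\bar R)) : \bar R := ereal_sup (E `|` [set 0%E]).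

Definition opnormA (A T : V -> V) : \bar R :=
  sup0 [set (normA A (T z))%:E | z in unitA A].

Definition omegaA (A T : V -> V) : \bar R :=
  sup0 [set (ComplexField.Normc.normc (ip (A (T z)) z))%:E | z in unitA A].

Definition domegaA (A T : V -> V) : \bar R :=
  sup0 [set (Num.sqrt (ComplexField.Normc.normc (ip (A (T z)) z) ^+ 2 + normA A (T z) ^+ 4))%:E
       | z in unitA A].

End Hilbert.

(* Main.v *)
Require Import Defs.
From HB Require Import structures.
From mathcomp Require Import all_boot all_order all_algebra.
From mathcomp Require Import boolp classical_sets reals ereal.
From mathcomp Require Import complex.
From mathcomp Require Import ring lra.
Import Order.TTheory GRing.Theory Num.Theory.
Local Open Scope ring_scope.

Section Helpers.
Set Implicit Arguments. Unset Strict Implicit. Unset Printing Implicit Defensive.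
Local Open Scope complex_scope.
Local Open Scope classical_set_scope.
Local Notation Rc := (@complex.Re _).
Local Notation Ic := (@complex.Im _).

Section Form.
Variables (R : realType) (V : lmodType R[i]) (q : V -> V -> R[i]).
Hypothesis qL : forall a x y z, q (a *: x + y) z = a * q x z + q y z.
Hypothesis qH : forall x y, q y x = conjc (q x y).
Hypothesis qP : forall x, 0 <= q x x.

Lemma q0l z : q 0 z = 0.
Proof. have := qL 1 0 0 z. rewrite scaler0 addr0 mul1r => h. by apply: (addIr (q 0 z)); rewrite add0r. Qed.
Lemma qDl x y z : q (x + y) z = q x z + q y z.
Proof. by have := qL 1 x y z; rewrite scale1r mul1r. Qed.
Lemma qZl a x z : q (a *: x) z = a * q x z.
Proof. by rewrite -(addr0 (a *: x)) qL q0l addr0. Qed.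
Lemma qNl x z : q (- x) z = - q x z.
Proof. by rewrite -scaleN1r qZl mulN1r. Qed.
Lemma qBl x y z : q (x - y) z = q x z - q y z.
Proof. by rewrite qDl qNl. Qed.
Lemma qZr a x z : q x (a *: z) = conjc a * q x z.
Proof. by rewrite qH qZl rmorphM /= -qH. Qed.
Lemma qDr x y z : q x (y + z) = q x y + q x z.
Proof. by rewrite qH qDl rmorphD /= -!qH. Qed.
Lemma qNr x z : q x (- z) = - q x z.
Proof. by rewrite qH qNl rmorphN /= -!qH. Qed.
Lemma qBr x y z : q x (y - z) = q x y - q x z.
Proof. by rewrite qDr qNr. Qed.
Lemma q0r z : q z 0 = 0.
Proof. by rewrite qH q0l rmorph0. Qed.

Lemma qreal x : q x x = (Rc (q x x))%:C.
Proof. have := ger0_Im (qP x). by case: (q x x) => a b /= ->. Qed.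

Definition nrm x := Rc (q x x).
Lemma nrm_ge0 x : 0 <= nrm x.
Proof. have := qP x; rewrite lecE => /andP[_]. by []. Qed.
End Form.
Section CS.
Variables (R : realType) (V : lmodType R[i]) (q : V -> V -> R[i]).
Hypothesis qL : forall a x y z, q (a *: x + y) z = a * q x z + q y z.
Hypothesis qH : forall x y, q y x = conjc (q x y).
Hypothesis qP : forall x, 0 <= q x x.

Lemma normc_sq (c : R[i]) : ComplexField.Normc.normc c ^+ 2 = Rc c ^+ 2 + Ic c ^+ 2.
Proof. case: c => a b /=. by rewrite sqr_sqrtr // addr_ge0 // sqr_ge0. Qed.

Lemma quad_expand x y t : nrm q (x + (- (t%:C * q x y)) *: y) =
   nrm q x - 2 * t * (ComplexField.Normc.normc (q x y) ^+ 2)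
   + t ^+ 2 * (ComplexField.Normc.normc (q x y) ^+ 2) * nrm q y.
Proof.
rewrite /nrm (qDl qL) !(qDr qL qH) !(qZl qL) !(qZr qL qH) (qH x y).
rewrite (qreal qP x) (qreal qP y) normc_sq.
case: (q x y) => cr ci. move: (Rc (q x x)) (Rc (q y y)) => a b.
rewrite /=. ring.
Qed.
End CS.
Section CS2.
Variables (R : realType) (V : lmodType R[i]) (q : V -> V -> R[i]).
Hypothesis qL : forall a x y z, q (a *: x + y) z = a * q x z + q y z.
Hypothesis qH : forall x y, q y x = conjc (q x y).
Hypothesis qP : forall x, 0 <= q x x.

Lemma CS x y : ComplexField.Normc.normc (q x y) ^+ 2 <= nrm q x * nrm q y.
Proof.
have H t : 0 <= nrm q x - 2 * t * (ComplexField.Normc.normc (q x y) ^+ 2)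
   + t ^+ 2 * (ComplexField.Normc.normc (q x y) ^+ 2) * nrm q y.
  by rewrite -(quad_expand qL qH qP); apply: nrm_ge0.
move: H (nrm_ge0 qP x) (nrm_ge0 qP y).
move: (ComplexField.Normc.normc (q x y) ^+ 2) (sqr_ge0 (ComplexField.Normc.normc (q x y))).
move: (nrm q x) (nrm q y) => a b K K0 H a0 b0.
have [bz|bp] := eqVneq b 0.
  subst b. have [Kz|Kp] := eqVneq K 0; first by subst K; rewrite mulr0.
  have := H ((a + 1) / (2 * K)).
  have -> : a - 2 * ((a + 1) / (2 * K)) * K + ((a + 1) / (2 * K)) ^+ 2 * K * 0 = -1.
    by field.
  by rewrite ler0N1.
have := H b^-1.
have e : a - 2 * b^-1 * K + b^-1 ^+ 2 * K * b = (a * b - K) / b by field.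
rewrite e => h.
have bpos : 0 < b by rewrite lt_def bp b0.
by rewrite -subr_ge0; move: h; rewrite pmulr_lge0 // invr_gt0.
Qed.
End CS2.
Section Herm.
Variables (R : realType) (V : lmodType R[i]) (f : V -> V -> R[i]).
Hypothesis fL : forall a x y z, f (a *: x + y) z = a * f x z + f y z.
Hypothesis fR : forall a x y z, f x (a *: y + z) = conjc a * f x y + f x z.
Hypothesis fD : forall x, Ic (f x x) = 0.

Lemma f0r x : f x 0 = 0.
Proof. have := fR 1 x 0 0. rewrite scaler0 addr0 rmorph1 mul1r => h.
by apply: (addIr (f x 0)); rewrite add0r. Qed.
Lemma fDr x y z : f x (y + z) = f x y + f x z.
Proof. by have := fR 1 x y z; rewrite scale1r rmorph1 mul1r. Qed.
Lemma fZr a x y : f x (a *: y) = conjc a * f x y.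
Proof. by have := fR a x y 0; rewrite !addr0 f0r addr0. Qed.

Lemma herm x y : f y x = conjc (f x y).
Proof.
have h1 := fD (x + y). have h2 := fD (x + 'i *: y).
rewrite !(qDl fL) !fDr !(qZl fL) !fZr in h1 h2.
move: (fD x) (fD y) h1 h2.
case: (f x y) => a b; case: (f y x) => c d; case: (f x x) => ? ?; case: (f y y) => ? ?.
move=> /= e1 e2 h1 h2.
apply/eqP; rewrite eq_complex /=; apply/andP; split; apply/eqP.
  lra. 
lra.
Qed.
End Herm.
Section Nrm.
Variables (R : realType) (V : lmodType R[i]) (q : V -> V -> R[i]).
Hypothesis qL : forall a x y z, q (a *: x + y) z = a * q x z + q y z.
Hypothesis qH : forall x y, q y x = conjc (q x y).
Hypothesis qP : forall x, 0 <= q x x.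

Lemma nrm_comb (s t : R) a b : nrm q (s%:C *: a + t%:C *: b) =
  s ^+ 2 * nrm q a + t ^+ 2 * nrm q b + 2 * s * t * Rc (q a b).
Proof.
rewrite /nrm (qDl qL) !(qDr qL qH) !(qZl qL) !(qZr qL qH) (qH a b).
rewrite (qreal qP a) (qreal qP b).
case: (q a b) => cr ci. move: (Rc (q a a)) (Rc (q b b)) => x y.
rewrite /=. ring.
Qed.

Lemma nrm_add a b : nrm q (a + b) = nrm q a + nrm q b + 2 * Rc (q a b).
Proof. have := nrm_comb 1 1 a b. by rewrite rmorph1 !scale1r expr1n !mul1r !mulr1. Qed.

Lemma nrm_sub a b : nrm q (a - b) = nrm q a + nrm q b - 2 * Rc (q a b).
Proof.
have := nrm_comb 1 (-1) a b; rewrite rmorphN rmorph1 scale1r rmorph1 scaleN1r => ->.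
ring.
Qed.

Lemma nrmN a : nrm q (- a) = nrm q a.
Proof. rewrite -(add0r (- a)) nrm_sub /nrm !(q0l qL) /=. ring. Qed.

Lemma nrm_scale (s : R) a : nrm q (s%:C *: a) = s ^+ 2 * nrm q a.
Proof.
have := nrm_comb s 0 a a; rewrite rmorph0 scale0r addr0 => ->.
ring.
Qed.

Lemma paral a b : nrm q (a + b) + nrm q (a - b) = 2 * nrm q a + 2 * nrm q b.
Proof. rewrite nrm_add nrm_sub. ring. Qed.

Lemma nrm_add_le (d : R) a b : 0 < d ->
  nrm q (a + b) <= (1 + d) * nrm q a + (1 + d^-1) * nrm q b.
Proof.
move=> d0.
have h := nrm_ge0 qP (d%:C *: a - b).
have := nrm_comb d (-1) a b; rewrite rmorphN rmorph1 scaleN1r => e0.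
rewrite e0 in h. rewrite nrm_add.
have hd : d * d^-1 = 1 by rewrite mulfV // gt_eqF.
have ha := nrm_ge0 qP a. have hb := nrm_ge0 qP b.
move: h ha hb hd. move: (erefl d^-1) (nrm q a) (nrm q b) (Rc (q a b)). move: {2 3}(d^-1) => di hdi x y c h ha hb hd.
have e : di * (d ^+ 2 * x + (-1) ^+ 2 * y + 2 * d * (-1) * c) = d * x + di * y - 2 * c.
  have -> : di * (d ^+ 2 * x + (-1) ^+ 2 * y + 2 * d * (-1) * c) =
     (d * di) * (d * x) + di * y - 2 * (d * di) * c by ring.
  by rewrite hd; ring.
have : 0 <= d * x + di * y - 2 * c.
  rewrite -e; apply: mulr_ge0 => //. by rewrite -hdi invr_ge0 ltW.
move=> h2. rewrite hdi. nra.
Qed.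
End Nrm.
Lemma inv_le (R : realType) (m N : nat) : (N <= m)%N -> (m.+1%:R : R)^-1 <= (N.+1%:R)^-1.
Proof. by move=> h; rewrite lef_pV2 ?posrE ?ltr0Sn // ler_nat ltnS. Qed.

Lemma small_inv (R : realType) (e : R) : 0 < e -> exists N : nat, (N.+1%:R : R)^-1 < e.
Proof.
move=> e0; exists (Num.bound (e^-1)).
have h : e^-1 < (Num.bound e^-1)%:R by apply: archi_boundP; rewrite invr_ge0 ltW.
rewrite -[e in _ < e]invrK ltf_pV2 ?posrE ?ltr0Sn ?invr_gt0 //.
by apply: (lt_le_trans h); rewrite ler_nat.
Qed.

Lemma small_inv_le (R : realType) (e : R) : 0 < e -> exists N : nat, forall m, (N <= m)%N -> (m.+1%:R : R)^-1 < e.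
Proof.
move=> /small_inv [N hN]; exists N => m hm; exact: (le_lt_trans (inv_le R hm) hN).
Qed.
Section Proj.
Variables (R : realType) (V : lmodType R[i]) (ip : V -> V -> R[i]).
Hypothesis ipL : forall a x y z, ip (a *: x + y) z = a * ip x z + ip y z.
Hypothesis ipH : forall x y, ip y x = conjc (ip x y).
Hypothesis ipP : forall x, 0 <= ip x x.
Hypothesis ipC : is_complete ip.

Local Notation nr := (nrm ip).

Lemma hnorm_lt x (e : R) : 0 < e -> nr x < e ^+ 2 -> hnorm ip x < e.
Proof.
move=> e0 h; rewrite /hnorm -(ger0_norm (ltW e0)) -sqrtr_sqr ltr_sqrt //.
exact: exprn_gt0.
Qed.

Lemma hnorm_lt2 x (e : R) : 0 < e -> hnorm ip x < e -> nr x < e ^+ 2.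
Proof.
move=> e0 h; rewrite -ltr_sqrt ?exprn_gt0 // sqrtr_sqr ger0_norm //; exact: ltW.
Qed.

Variable M : set V.
Hypothesis M0 : M 0.
Hypothesis MD : forall x y, M x -> M y -> M (x + y).
Hypothesis MZ : forall (a : R[i]) x, M x -> M (a *: x).
Hypothesis Mcl : forall l, (forall e : R, 0 < e -> exists m, M m /\ hnorm ip (l - m) < e) -> M l.

Lemma proj r : exists p, M p /\ forall m, M m -> ip (r - p) m = 0.
Proof.
pose E := (fun m : V => nr (r - m)) @` M.
have E0 : E (nr (r - 0)) by exists 0.
have lbE : lbound E 0 by move=> _ [m _ <-]; apply: nrm_ge0.
have hE : has_inf E by split; [exists (nr (r - 0)) | exists 0].
pose D := inf E.
have D0 : 0 <= D by apply: lb_le_inf => //; exists (nr (r - 0)).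
have DleE m : M m -> D <= nr (r - m).
  by move=> Mm; apply: ge_inf; [exists 0 | exists m].
have : forall n : nat, exists m, M m /\ nr (r - m) < D + (n.+1%:R)^-1.
  move=> n; have hp : 0 < (n.+1%:R : R)^-1 by rewrite invr_gt0 ltr0Sn.
  have [_ [m Mm <-] h] := inf_adherent hp hE.
  by exists m.
case/choice => u hu.
have cauchy n k : nr (u n - u k) <= 2 * (n.+1%:R)^-1 + 2 * (k.+1%:R)^-1.
  have := paral ipL ipH ipP (r - u k) (r - u n).
  have -> : (r - u k) - (r - u n) = u n - u k.
    by rewrite opprB addrC addrA subrK.
  have -> : (r - u k) + (r - u n) = 2%:R%:C *: (r - (2%:R^-1)%:C *: (u k + u n)).
    rewrite scalerBr scalerA -rmorphM mulfV ?pnatr_eq0 // rmorph1 scale1r.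
    rewrite rmorph_nat scaler_nat mulr2n. rewrite opprD addrACA. by [].
  rewrite nrm_scale //.
  have := DleE _ (MZ (2%:R^-1)%:C (MD (hu k).1 (hu n).1)).
  have := (hu k).2. have := (hu n).2. rewrite expr2.
  move: (n.+1%:R^-1 : R) (k.+1%:R^-1 : R) => a b. lra.
have hcv : forall e : R, 0 < e -> exists N : nat, forall m n : nat,
        (N <= m)%N -> (N <= n)%N -> hnorm ip (u m - u n) < e.
  move=> e e0.
  have [N hN] : exists N : nat, forall m, (N <= m)%N -> (m.+1%:R : R)^-1 < e ^+ 2 / 4.
    by apply: small_inv_le; rewrite divr_gt0 // expr2; apply: mulr_gt0.
  exists N => m n hm hn; apply: hnorm_lt => //.
  apply: (le_lt_trans (cauchy m n)).
  have := hN m hm; have := hN n hn.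
  move: (m.+1%:R^-1 : R) (n.+1%:R^-1 : R) (e ^+ 2) => a b c. lra.
have [l hl] := ipC hcv.
have hnE y : hnorm ip y = Num.sqrt (nr y) by [].
have Ml : M l.
  apply: Mcl => e e0; have [N hN] := hl e e0; exists (u N); split; first exact: (hu N).1.
  by rewrite hnE -nrmN // opprB -hnE; apply: hN.
have rl : nr (r - l) <= D.
  apply/ler_addgt0Pr => eta eta0.
  pose eps := Num.min 1 (eta / (D + 4)).
  have D4 : 0 < D + 4 by lra.
  have eps0 : 0 < eps by rewrite lt_min ltr01 divr_gt0.
  have eps1 : eps <= 1 by rewrite ge_min lexx.
  have epsD : eps * (D + 4) <= eta.
    by rewrite -ler_pdivlMr // ge_min lexx orbT.
  have [N1 hN1] := hl eps eps0. have [N2 hN2] := small_inv_le eps0.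
  pose n := maxn N1 N2.
  have h1 := hnorm_lt2 eps0 (hN1 n (leq_maxl _ _)).
  have h2 := hN2 n (leq_maxr _ _).
  have h3 := (hu n).2.
  have h4 := nrm_add_le ipL ipH ipP (r - u n) (u n - l) eps0.
  rewrite (_ : r - u n + (u n - l) = r - l) in h4; last by rewrite addrA subrK.
  have ie0 : 0 <= 1 + eps^-1 by rewrite addr_ge0 // invr_ge0 ltW.
  have h5 : (1 + eps^-1) * nr (u n - l) <= eps ^+ 2 + eps.
    have -> : eps ^+ 2 + eps = (1 + eps^-1) * eps ^+ 2 by field; rewrite gt_eqF.
    by rewrite ler_wpM2l // ltW.
  have h6 : (1 + eps) * nr (r - u n) <= (1 + eps) * (D + eps).
    by rewrite ler_wpM2l ?addr_ge0 ?ltW //; move: h3 h2; move: (n.+1%:R^-1 : R) => a; lra.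
  have h7 : eps ^+ 2 <= eps by rewrite expr2 ger_pMl.
  move: h4 h5 h6 h7 epsD. move: (nr (r - l)) ((1 + eps^-1) * nr (u n - l)) (nr (r - u n)) => A B C.
  nra.
exists l; split => // m Mm.
pose c := ip (r - l) m.
pose s := (nr m + 1)^-1.
have m0 := nrm_ge0 ipP m.
have s0 : 0 < s by rewrite invr_gt0; lra.
have sm : s * nr m <= 1 by rewrite mulrC ler_pdivrMr; lra.
have := DleE (l + (s%:C * c) *: m) (MD Ml (MZ _ Mm)).
rewrite (_ : r - (l + (s%:C * c) *: m) = (r - l) + (- (s%:C * c)) *: m); last first.
  by rewrite opprD addrA scaleNr.
rewrite /c quad_expand //.
have K0 := sqr_ge0 (ComplexField.Normc.normc (ip (r - l) m)).
move=> h.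
have : ComplexField.Normc.normc (ip (r - l) m) ^+ 2 <= 0.
  move: rl K0 h. move: (ComplexField.Normc.normc (ip (r - l) m) ^+ 2) => K rl K0 h.
  have h' : 0 <= s * K * (s * nr m - 2) by nra.
  have sK : 0 <= s * K by rewrite mulr_ge0 // ltW.
  have h3 : s * K * (s * nr m - 2) <= s * K * (-1) by rewrite ler_wpM2l //; lra.
  have : s * K <= 0 by lra.
  by rewrite pmulr_rle0.
move=> h2; have : ComplexField.Normc.normc (ip (r - l) m) = 0.
  apply/eqP; rewrite -sqrf_eq0; apply/eqP; apply: le_anti; rewrite h2 sqr_ge0 //.
by move/ComplexField.Normc.eq0_normc.
Qed.
End Proj.
Lemma Re_le_normc (R : realType) (c : R[i]) : Rc c <= ComplexField.Normc.normc c.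
Proof.
case: c => a b /=. apply: (le_trans (ler_norm a)). rewrite -sqrtr_sqr ler_sqrt.
  by rewrite lerDl sqr_ge0.
by rewrite addr_ge0 // sqr_ge0.
Qed.
Lemma normc_ge0 (R : realType) (c : R[i]) : 0 <= ComplexField.Normc.normc c.
Proof. by case: c => a b /=; rewrite sqrtr_ge0. Qed.
Lemma Re_conjc (R : realType) (c : R[i]) : Rc (conjc c) = Rc c.
Proof. by case: c. Qed.
Lemma normc_le_sqrt (R : realType) (c : R[i]) (x : R) :
  ComplexField.Normc.normc c ^+ 2 <= x -> ComplexField.Normc.normc c <= Num.sqrt x.
Proof.
move=> h. rewrite -(ger0_norm (normc_ge0 c)) -sqrtr_sqr ler_sqrt //.
exact: le_trans (sqr_ge0 _) h.
Qed.
Section Point.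
Variables (R : realType) (V : lmodType R[i]) (q : V -> V -> R[i]).
Hypothesis qL : forall a x y z, q (a *: x + y) z = a * q x z + q y z.
Hypothesis qH : forall x y, q y x = conjc (q x y).
Hypothesis qP : forall x, 0 <= q x x.
Variables (S Ss : V -> V).
Hypothesis K : forall x y, q (Ss x) y = q x (S y).

Local Notation nc := ComplexField.Normc.normc.

Lemma pointwise z : nrm q z = 1 ->
  nc (q (S z) z) ^+ 2 + nrm q (S z) ^+ 2 <=
  1 / 4 * Num.sqrt (nrm q (Ss (S z) + S (Ss z) + (4 : R[i]) *: Ss (S (Ss (S z)))))
  + 1 / 2 * nc (q (S (S z)) z).
Proof.
move=> z1.
pose c1 := q (S z) z. pose c2 := q (S (S z)) z.
have e1 : q z (Ss z) = c1 by rewrite qH K -qH.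
have e2 : q (S z) (Ss z) = c2 by rewrite qH K -qH.
pose d := q (Ss z) z.
have ed : conjc d = c1 by rewrite /d -qH e1.
pose v := (2 * d) *: z - Ss z.
have nv : nrm q v = nrm q (Ss z).
  rewrite /v /nrm (qBl qL) !(qBr qL qH) !(qZl qL) !(qZr qL qH).
  rewrite -/d e1 -ed rmorphM /= (qreal qP z) -/(nrm q z) z1.
  rewrite /d (qreal qP (Ss z)); clear ed; case: (q (Ss z) z) => a b /=. simpc. ring.
have qv : q (S z) v = 2 * c1 * c1 - c2.
  rewrite /v (qBr qL qH) (qZr qL qH) rmorphM /= ed e2 -/c1.
  congr (_ * _ * _ - _).
  rewrite -[RHS](rmorph_nat (real_complex R)). apply/eqP. rewrite eq_complex /=.
  by rewrite addr0 oppr0 !eqxx.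
have cs := CS qL qH qP (S z) v.
rewrite qv nv in cs.
have ha : nrm q (S z) = Rc (q (Ss (S z)) z) by rewrite /nrm K.
have hb : nrm q (Ss z) = Rc (q (S (Ss z)) z) by rewrite /nrm K qH Re_conjc.
have tri : nc (2 * c1 * c1) <= nc (2 * c1 * c1 - c2) + nc c2.
  by have := le_normcD (2 * c1 * c1 - c2) c2; rewrite subrK.
have n2 : nc (2 * c1 * c1) = 2 * nc c1 ^+ 2.
  rewrite !ComplexField.Normc.normcM expr2 mulrA; congr (_ * _ * _).
  rewrite /ComplexField.Normc.normc /= addr0 [(0:R) ^+ 2]expr2 mul0r addr0 sqrtr_sqr ger0_norm //.
have bnd : nc (2 * c1 * c1 - c2) <= (nrm q (S z) + nrm q (Ss z)) / 2.
  have := normc_ge0 (2 * c1 * c1 - c2). have := nrm_ge0 qP (S z). have := nrm_ge0 qP (Ss z).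
  move: cs. move: (nc (2 * c1 * c1 - c2)) (nrm q (S z)) (nrm q (Ss z)) => X A B.
  move=> cs hB hA hX.
  have h1 : X ^+ 2 <= ((A + B) / 2) ^+ 2 by have := sqr_ge0 (A - B); move: cs; rewrite !expr2; lra.
  have hY : 0 <= (A + B) / 2 by lra.
  move: h1 hY; move: ((A + B) / 2) => Y h1 hY. nra.
pose W := Ss (S z).
have csW := CS qL qH qP W z. rewrite z1 mulr1 in csW.
have hW : Rc (q W z) <= nc (q W z) := Re_le_normc _.
have sqW : nrm q (S z) ^+ 2 <= nrm q W.
  rewrite ha -/W. have := nrm_ge0 qP (S z). rewrite ha -/W => h0.
  move: csW hW h0. move: (nc (q W z)) (Rc (q W z)) (nrm q W) => X Y Z. nra.
have eW : nrm q W = Rc (q (Ss (S W)) z).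
  have k1 := K (S z) W. have k2 := K (S W) z.
  by rewrite /nrm {1}/W k1 qH Re_conjc -k2.
pose T := Ss (S z) + S (Ss z) + (4 : R[i]) *: Ss (S (Ss (S z))).
have eT : Rc (q T z) = Rc (q (Ss (S z)) z) + Rc (q (S (Ss z)) z) + 4 * Rc (q (Ss (S W)) z).
  rewrite /T !(qDl qL) (qZl qL) /W.
  case: (q (Ss (S z)) z) => ? ?; case: (q (S (Ss z)) z) => ? ?; case: (q (Ss (S (Ss (S z)))) z) => ? ?.
  simpc => /=. ring.
have csT := CS qL qH qP T z. rewrite z1 mulr1 in csT.
have hT : Rc (q T z) <= Num.sqrt (nrm q T).
  exact: le_trans (Re_le_normc _) (normc_le_sqrt csT).
rewrite -/T -/c1 -/c2.
have := nrm_ge0 qP (S z).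
move: tri n2 bnd sqW eW eT hT ha hb.
move: (nc (2 * c1 * c1)) (nc (2 * c1 * c1 - c2)) (nc c1) (nc c2) (nrm q (S z)) (nrm q (Ss z)).
move: (nrm q W) (Rc (q (Ss (S W)) z)) (Rc (q T z)) (Num.sqrt (nrm q T)).
move: (Rc (q (Ss (S z)) z)) (Rc (q (S (Ss z)) z)).
move=> r1 r2 sT qT rW nW A B X Y C1 C2 tri n2 bnd sqW eW eT hT ha hb _.
lra.
Qed.
End Point.
Section Lin.
Variables (R : realType) (V : lmodType R[i]) (T : V -> V).
Hypothesis TL : forall a x y, T (a *: x + y) = a *: T x + T y.
Lemma T0 : T 0 = 0.
Proof. have := TL 1 0 0. rewrite scaler0 addr0 scale1r => h.
by apply: (addIr (T 0)); rewrite add0r. Qed.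
Lemma TD x y : T (x + y) = T x + T y.
Proof. by have := TL 1 x y; rewrite !scale1r. Qed.
Lemma TZ a x : T (a *: x) = a *: T x.
Proof. by have := TL a x 0; rewrite !addr0 T0 addr0. Qed.
Lemma TB x y : T (x - y) = T x - T y.
Proof. by rewrite TD -scaleN1r TZ scaleN1r. Qed.
End Lin.

Section Hilb.
Variables (R : realType) (V : lmodType R[i]) (ip : V -> V -> R[i]).
Hypothesis ipL : forall a x y z, ip (a *: x + y) z = a * ip x z + ip y z.
Hypothesis ipH : forall x y, ip y x = conjc (ip x y).
Hypothesis ipP : forall x, 0 <= ip x x.
Hypothesis ipD : forall x, ip x x = 0 -> x = 0.
Hypothesis ipC : is_complete ip.
Local Notation nc := ComplexField.Normc.normc.

Lemma hnorm_ge0 x : 0 <= hnorm ip x.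
Proof. exact: sqrtr_ge0. Qed.

Lemma le0_of_approx (M : set V) (x C : R) l :
  (forall e : R, 0 < e -> exists m, M m /\ hnorm ip (l - m) < e) ->
  (forall m, M m -> x <= C * hnorm ip (l - m)) -> x <= 0.
Proof.
move=> ha hb; apply/ler_addgt0Pr => eta eta0; rewrite add0r.
have C1 : 0 < `|C| + 1 by rewrite ltr_wpDl.
have [m [Mm hm]] := ha (eta / (`|C| + 1)) (divr_gt0 eta0 C1).
have h1 := hb m Mm.
have h2 : C * hnorm ip (l - m) <= `|C| * hnorm ip (l - m) by rewrite ler_wpM2r ?hnorm_ge0 ?ler_norm.
have h3 : (`|C| + 1) * hnorm ip (l - m) < eta.
  by rewrite mulrC -ltr_pdivlMr.
have h4 := hnorm_ge0 (l - m).
move: h1 h2 h3 h4; move: (hnorm ip (l - m)) => hn. nra.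
Qed.

Lemma riesz (g : V -> R[i]) (C : R) :
  (forall a x y, g (a *: x + y) = a * g x + g y) ->
  (forall x, nc (g x) <= C * hnorm ip x) -> exists w, forall u, g u = ip u w.
Proof.
move=> gL gb.
have g0 : g 0 = 0.
  have := gL 1 0 0; rewrite scaler0 addr0 mul1r => h.
  by apply: (addIr (g 0)); rewrite add0r.
have gD x y : g (x + y) = g x + g y by have := gL 1 x y; rewrite scale1r mul1r.
have gZ a x : g (a *: x) = a * g x by have := gL a x 0; rewrite !addr0 g0 addr0.
have gB x y : g (x - y) = g x - g y by rewrite gD -scaleN1r gZ mulN1r.
pose M := [set x | g x = 0].
have M0 : M 0 by [].
have MD x y : M x -> M y -> M (x + y) by rewrite /M /= gD => -> ->; rewrite addr0.
have MZ a x : M x -> M (a *: x) by rewrite /M /= gZ => ->; rewrite mulr0.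
have Mcl l : (forall e : R, 0 < e -> exists m, M m /\ hnorm ip (l - m) < e) -> M l.
  move=> ha; have h := le0_of_approx (x := nc (g l)) (C := C) ha.
  have : nc (g l) <= 0.
    apply: h => m Mm; have := gb (l - m); rewrite gB Mm subr0; exact.
  move=> h0; apply: ComplexField.Normc.eq0_normc; apply: le_anti; rewrite h0 normc_ge0 //.
case: (pselect (exists u0, g u0 != 0)) => [[u0 hu0]|hno]; last first.
  exists 0 => u; rewrite (q0r ipL ipH).
  by apply/eqP; apply: contra_notT hno => h; exists u.
have [p [Mp hp]] := proj ipL ipH ipP ipC M0 MD MZ Mcl u0.
pose e := u0 - p.
have ge : g e = g u0 by rewrite /e gB Mp subr0.
have gen0 : g e != 0 by rewrite ge.
have iee : ip e e != 0.
  apply/eqP => /ipD e0; move: gen0; by rewrite e0 g0 eqxx.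
exists (conjc (g e / ip e e) *: e) => u.
rewrite (qZr ipL ipH) conjcK.
pose k := g u / g e.
have Mv : M (u - k *: e) by rewrite /M /= gB gZ /k mulfVK // subrr.
have hv : ip (u - k *: e) e = 0 by rewrite ipH hp // rmorph0.
have : ip u e = k * ip e e.
  by move: hv; rewrite (qBl ipL) (qZl ipL) => /eqP; rewrite subr_eq0 => /eqP.
move=> ->; rewrite /k. field. by apply/andP; split.
Qed.
End Hilb.
Section Hilb2.
Variables (R : realType) (V : lmodType R[i]) (ip : V -> V -> R[i]).
Hypothesis ipL : forall a x y z, ip (a *: x + y) z = a * ip x z + ip y z.
Hypothesis ipH : forall x y, ip y x = conjc (ip x y).
Hypothesis ipP : forall x, 0 <= ip x x.
Hypothesis ipD : forall x, ip x x = 0 -> x = 0.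
Hypothesis ipC : is_complete ip.
Local Notation nc := ComplexField.Normc.normc.

Lemma adj_spec (S : V -> V) : bounded_op ip S ->
  forall y x, ip (S x) y = ip x (adjoint ip S y).
Proof.
move=> [SL [MS hMS]] y.
apply: (@xgetPex _ 0 [set w : V | forall x : V, ip (S x) y = ip x w]).
apply: (riesz ipL ipH ipP ipD ipC (C := MS * hnorm ip y)).
  by move=> a x x'; rewrite SL ipL.
move=> x.
have cs := CS ipL ipH ipP (S x) y.
have h1 : nc (ip (S x) y) <= hnorm ip (S x) * hnorm ip y.
  rewrite /hnorm -sqrtrM ?nrm_ge0 //; exact: normc_le_sqrt.
apply: (le_trans h1). rewrite mulrAC ler_wpM2r ?hnorm_ge0 //.
Qed.

Lemma hnorm_eq0 x : hnorm ip x <= 0 -> x = 0.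
Proof.
move=> h; apply: ipD.
have h0 : hnorm ip x = 0 by apply: le_anti; rewrite h hnorm_ge0.
move: h0; rewrite /hnorm => /eqP; rewrite sqrtr_eq0 => h1.
have h2 : nrm ip x = 0 by apply: le_anti; rewrite h1 nrm_ge0.
by rewrite (qreal ipP x); move: h2; rewrite /nrm => ->.
Qed.

Lemma mpinv_spec (A : V -> V) : bounded_op ip A -> forall r, A (mpinv ip A (A r)) = A r.
Proof.
move=> [AL [MA hMA]] r.
pose M := [set x | A x = 0].
have M0 : M 0 by rewrite /M /= (T0 AL).
have MD x y : M x -> M y -> M (x + y) by rewrite /M /= (TD AL) => -> ->; rewrite addr0.
have MZ a x : M x -> M (a *: x) by rewrite /M /= (TZ AL) => ->; rewrite scaler0.
have Mcl l : (forall e : R, 0 < e -> exists m, M m /\ hnorm ip (l - m) < e) -> M l.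
  move=> ha; apply: hnorm_eq0.
  apply: (le0_of_approx (C := MA) ha) => m Mm.
  by have := hMA (l - m); rewrite (TB AL) Mm subr0.
have [p [Mp hp]] := proj ipL ipH ipP ipC M0 MD MZ Mcl r.
have := @xgetPex _ 0 [set x : V | (forall k : V, A k = 0 -> ip x k = 0) /\ A x = A r].
case.
  by exists (r - p); split; [move=> k hk; apply: hp | rewrite (TB AL) Mp subr0].
by move=> _ ->.
Qed.

Lemma key (A S : V -> V) : positive_op ip A -> in_BA ip A S ->
  forall x y, ip (A (sharpA ip A S x)) y = ip (A x) (S y).
Proof.
move=> [Ab _] [Sb [Rop [_ hR]]] x y.
rewrite /sharpA -hR mpinv_spec // hR.
by rewrite ipH -adj_spec // -ipH.
Qed.
End Hilb2.

End Helpers.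

Theorem corollary2p22 (R : realType) (V : lmodType R[i]) (ip : V -> V -> R[i])
    (A S : V -> V) :
  is_hilbert ip -> positive_op ip A -> in_BA ip A S ->
  let Ss := sharpA ip A S in
  let T := fun z => Ss (S z) + S (Ss z) + (4 : R[i]) *: Ss (S (Ss (S z))) in
  (domegaA ip A S * domegaA ip A S <=
     (1 / 4 : R)%:E * opnormA ip A T
     + (1 / 2 : R)%:E * omegaA ip A (fun z => S (S z)))%E.
Proof.
move=> [[ipL ipH ipP ipD] ipC] hA hBA; cbv zeta.
set Ss := sharpA ip A S.
set T := fun z => Ss (S z) + S (Ss z) + (4 : R[i]) *: Ss (S (Ss (S z))).
have [[AL _] Apos] := hA.
pose q := fun x y => ip (A x) y.
have qL : forall a x y z, q (a *: x + y) z = a * q x z + q y z.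
  by move=> a x y z; rewrite /q AL ipL.
have qR : forall a x y z, q x (a *: y + z) = conjc a * q x y + q x z.
  move=> a x y z; rewrite /q [LHS]ipH ipL (ipH y (A x)) (ipH z (A x)) rmorphD rmorphM; reflexivity.
have qD : forall x, complex.Im (q x x) = 0 by move=> x; apply: ger0_Im; apply: Apos.
have qH := herm qL qR qD.
have qP : forall x, 0 <= q x x := Apos.
have K : forall x y, q (Ss x) y = q x (S y) := key ipL ipH ipP ipD ipC hA hBA.
have pw := pointwise qL qH qP K.
have unit1 z : unitA ip A z -> nrm q z = 1.
  rewrite /unitA /normA /= => h.
  have := sqr_sqrtr (nrm_ge0 qP z). rewrite /nrm /q in h *. by rewrite h expr1n.
have a0 : (0 <= opnormA ip A T)%E by apply: ereal_sup_ubound; right.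
have b0 : (0 <= omegaA ip A (fun z => S (S z)))%E by apply: ereal_sup_ubound; right.
have ha z : unitA ip A z -> ((normA ip A (T z))%:E <= opnormA ip A T)%E.
  by move=> hz; apply: ereal_sup_ubound; left; exists z.
have hb z : unitA ip A z -> ((ComplexField.Normc.normc (ip (A (S (S z))) z))%:E
     <= omegaA ip A (fun z => S (S z)))%E.
  by move=> hz; apply: ereal_sup_ubound; left; exists z.
have d0 : (0 <= domegaA ip A S)%E by apply: ereal_sup_ubound; right.
move: a0 b0 ha hb.
case: (opnormA ip A T) => [ra| |] //; last first.
  move=> _ b0 _ _. rewrite gt0_muley ?lte_fin ?divr_gt0 // addye ?leey //.
  apply/negP => /eqP h.
  have : (0 <= (1 / 2 : R)%:E * omegaA ip A (fun z => S (S z)))%E.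
    by apply: mule_ge0 => //; rewrite lee_fin divr_ge0.
  by rewrite h.
case: (omegaA ip A (fun z => S (S z))) => [rb| |] //; last first.
  move=> a0 _ _ _. rewrite gt0_muley ?lte_fin ?divr_gt0 // addey ?leey //.
move=> a0 b0 ha hb.
have {a0}a0 : (0 <= ra)%R := a0.
have {b0}b0 : (0 <= rb)%R := b0.
pose X := 1 / 4 * ra + 1 / 2 * rb.
have X0 : 0 <= X by rewrite /X; lra.
have up : (domegaA ip A S <= (Num.sqrt X)%:E)%E.
  apply: ge_ereal_sup => _ [[z hz <-]|->]; last by rewrite lee_fin sqrtr_ge0.
  rewrite lee_fin ler_sqrt //.
  have h0 := pw z (unit1 z hz).
  have h1 : Num.sqrt (nrm q (T z)) <= ra by have := ha z hz; rewrite lee_fin.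
  have h2 : ComplexField.Normc.normc (q (S (S z)) z) <= rb by have := hb z hz; rewrite lee_fin.
  have e4 : normA ip A (S z) ^+ 4 = nrm q (S z) ^+ 2.
    by rewrite /normA (_ : 4 = 2 * 2)%N // exprM sqr_sqrtr // (nrm_ge0 qP).
  rewrite e4.
  change (ComplexField.Normc.normc (q (S z) z) ^+ 2 + nrm q (S z) ^+ 2 <= X).
  rewrite /X. move: h0 h1 h2. rewrite /T.
  move: (ComplexField.Normc.normc (q (S z) z) ^+ 2 + nrm q (S z) ^+ 2).
  move: (Num.sqrt (nrm q (Ss (S z) + S (Ss z) + 4 *: Ss (S (Ss (S z)))))).
  move: (ComplexField.Normc.normc (q (S (S z)) z)) => u v w. lra.
move: d0 up; case: (domegaA ip A S) => [rd| |] // d0 up.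
rewrite -!EFinM -EFinD lee_fin -/X.
have {d0}d0 : (0 <= rd)%R := d0.
have {up}up : (rd <= Num.sqrt X)%R := up.
have -> : X = Num.sqrt X * Num.sqrt X by rewrite -expr2 sqr_sqrtr.
by apply: ler_pM.
Qed.
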